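(* Let $I=[a,b]$, $K_1,K_2\in C(I\times I,\mathbb{R})$, $h\in C(I,\mathbb{R})$, and let $f,g:I\times\mathbb{R}\to\mathbb{R}$ be continuous. Consider the integral equation $$x(t)=\int_a^b\big(K_1(t,s)+K_2(t,s)\big)\big(f(s,x(s))+g(s,x(s))\big)\,ds+h(t),\qquad t\in I.$$ Assume: (i) $K_1(t,s)\ge0$ and $K_2(t,s)\le0$ for all $t,s\in I$; (ii) there exist $\theta\in\Theta$ and positive numbers $\lambda,\mu$ such that for all $t\in I$ and all $x,y\in\mathbb{R}$ with $x\ge y$, $$0\le f(t,x)-f(t,y)\le\lambda\,\theta(x-y),\qquad -\mu\,\theta(x-y)\le g(t,x)-g(t,y)\le 0;$$ (iii) $(\lambda+\mu)\cdot\sup_{t\in I}\int_a^b\big[K_1(t,s)-K_2(t,s)\big]ds\le 1$. If the equation admits a coupled lower-upper solution, then it has a unique solution in $C(I,\mathbb{R})$.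
   Context: $\Psi$ is the set of all functions $\psi:[0,\infty)\to[0,\infty)$ such that for every $r>0$ the limit $\lim_{t\to r}\psi(t)$ exists and is $>0$, and $\lim_{t\to0^+}\psi(t)=0$. $\Theta$ is the set of all functions $\theta:[0,\infty)\to[0,\infty)$ that are nondecreasing and for which there exists $\psi\in\Psi$ with $\theta(r)=\frac r2-\psi\!\left(\frac r2\right)$ for all $r\ge0$. A pair $(\alpha,\beta)$ of functions in $C(I,\mathbb{R})$ is a coupled lower-upper solution of the equation if for all $t\in I$: $$\alpha(t)\le\int_a^bK_1(t,s)[f(s,\alpha(s))+g(s,\beta(s))]ds+\int_a^bK_2(t,s)[f(s,\beta(s))+g(s,\alpha(s))]ds+h(t),$$ $$\beta(t)\ge\int_a^bK_1(t,s)[f(s,\beta(s))+g(s,\alpha(s))]ds+\int_a^bK_2(t,s)[f(s,\alpha(s))+g(s,\beta(s))]ds+h(t).$$ *)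

(* Defs.v *)
From Stdlib Require Import Reals ClassicalEpsilon.
Open Scope R_scope.

(* Riemann integral of f over [a,b]; equals RiemannInt when f is Riemann
   integrable (which holds for all integrands used below, being continuous),
   and 0 otherwise. RiemannInt is independent of the integrability proof. *)
Definition integral (f : R -> R) (a b : R) : R :=
  match excluded_middle_informative
          (exists pr : Riemann_integrable f a b, True) with
  | left H => RiemannInt (proj1_sig (constructive_indefinite_description _ H))
  | right _ => 0
  end.

Definition inI (a b t : R) : Prop := a <= t <= b.

Definition cont_on_I (a b : R) (x : R -> R) : Prop :=
  forall t, inI a b t -> forall eps, 0 < eps -> exists delta, 0 < delta /\
    forall t', inI a b t' -> Rabs (t' - t) < delta -> Rabs (x t' - x t) < eps.

Definition cont_on_II (a b : R) (K : R -> R -> R) : Prop :=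
  forall t s, inI a b t -> inI a b s -> forall eps, 0 < eps ->
    exists delta, 0 < delta /\
    forall t' s', inI a b t' -> inI a b s' -> Rabs (t' - t) < delta ->
      Rabs (s' - s) < delta -> Rabs (K t' s' - K t s) < eps.

Definition cont_on_IxR (a b : R) (f : R -> R -> R) : Prop :=
  forall t u, inI a b t -> forall eps, 0 < eps ->
    exists delta, 0 < delta /\
    forall t' u', inI a b t' -> Rabs (t' - t) < delta ->
      Rabs (u' - u) < delta -> Rabs (f t' u' - f t u) < eps.

(* The class Psi (functions on [0,oo), only their values on [0,oo) matter). *)
Definition in_Psi (psi : R -> R) : Prop :=
  (forall t, 0 <= t -> 0 <= psi t) /\
  (forall r, 0 < r -> exists L, 0 < L /\
     forall eps, 0 < eps -> exists delta, 0 < delta /\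
       forall t, 0 <= t -> t <> r -> Rabs (t - r) < delta ->
         Rabs (psi t - L) < eps) /\
  (forall eps, 0 < eps -> exists delta, 0 < delta /\
     forall t, 0 < t -> t < delta -> Rabs (psi t) < eps).

Definition in_Theta (theta : R -> R) : Prop :=
  (forall r, 0 <= r -> 0 <= theta r) /\
  (forall r s, 0 <= r -> r <= s -> theta r <= theta s) /\
  (exists psi, in_Psi psi /\ forall r, 0 <= r -> theta r = r / 2 - psi (r / 2)).

Definition eq_rhs (a b : R) (K1 K2 : R -> R -> R) (f g : R -> R -> R)
  (h : R -> R) (x : R -> R) (t : R) : R :=
  integral (fun s => (K1 t s + K2 t s) * (f s (x s) + g s (x s))) a b + h t.

Definition is_solution (a b : R) (K1 K2 f g : R -> R -> R) (h x : R -> R) : Prop :=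
  cont_on_I a b x /\ forall t, inI a b t -> x t = eq_rhs a b K1 K2 f g h x t.

Definition coupled_lower_upper (a b : R) (K1 K2 f g : R -> R -> R)
  (h alpha beta : R -> R) : Prop :=
  cont_on_I a b alpha /\ cont_on_I a b beta /\
  forall t, inI a b t ->
    alpha t <= integral (fun s => K1 t s * (f s (alpha s) + g s (beta s))) a b
             + integral (fun s => K2 t s * (f s (beta s) + g s (alpha s))) a b
             + h t /\
    beta t >= integral (fun s => K1 t s * (f s (beta s) + g s (alpha s))) a b
             + integral (fun s => K2 t s * (f s (alpha s) + g s (beta s))) a b
             + h t.

(* Main.v *)
Require Import Defs.
From Stdlib Require Import Reals Lra Lia Classical ClassicalEpsilon.
Open Scope R_scope.

Lemma tri (x y z : R) : Rabs (x - z) <= Rabs (x - y) + Rabs (y - z).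
Proof. unfold Rabs; repeat destruct Rcase_abs; lra. Qed.

Lemma abs_sym (x y : R) : Rabs (x - y) = Rabs (y - x).
Proof. unfold Rabs; repeat destruct Rcase_abs; lra. Qed.

Definition clamp (a b t : R) : R := Rmax a (Rmin b t).

Lemma clamp_in a b t : a <= b -> inI a b (clamp a b t).
Proof. unfold inI, clamp, Rmax, Rmin; repeat destruct Rle_dec; lra. Qed.

Lemma clamp_id a b t : inI a b t -> clamp a b t = t.
Proof. unfold inI, clamp, Rmax, Rmin; repeat destruct Rle_dec; lra. Qed.

Lemma clamp_lip a b t t' : a <= b -> Rabs (clamp a b t' - clamp a b t) <= Rabs (t' - t).
Proof. intro. unfold clamp, Rmax, Rmin; repeat destruct Rle_dec; unfold Rabs;
  repeat destruct Rcase_abs; lra. Qed.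

Lemma B1 a b u : a <= b -> cont_on_I a b u ->
  forall c, continuity_pt (fun t => u (clamp a b t)) c.
Proof.
  intros Hab Hu c. unfold continuity_pt, continue_in, limit1_in, limit_in; simpl; unfold R_dist.
  intros eps He. destruct (Hu (clamp a b c) (clamp_in a b c Hab) eps He) as [d [Hd Hd']].
  exists d; split; auto. intros x [_ Hx].
  apply Hd'; [apply clamp_in; auto|]. eapply Rle_lt_trans; [apply clamp_lip; auto| auto].
Qed.

Lemma B2 a b v : (forall c, inI a b c -> continuity_pt v c) -> cont_on_I a b v.
Proof.
  intros H t Ht eps He. specialize (H t Ht).
  unfold continuity_pt, continue_in, limit1_in, limit_in in H; simpl in H; unfold R_dist in H.
  destruct (H eps He) as [d [Hd Hd']]. exists d; split; auto.
  intros t' _ Hlt. destruct (Req_dec t' t) as [->|Hne].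
  - unfold Rminus; rewrite Rplus_opp_r, Rabs_R0; lra.
  - apply Hd'. split; [unfold D_x, no_cond; split; auto|auto].
Qed.

Lemma cont_ext a b u v : cont_on_I a b u -> (forall t, inI a b t -> u t = v t) ->
  cont_on_I a b v.
Proof.
  intros Hu E t Ht eps He. destruct (Hu t Ht eps He) as [d [Hd Hd']].
  exists d; split; auto. intros t' Ht' Hl. rewrite <- !E; auto.
Qed.

Lemma cont_mult a b u w : a <= b -> cont_on_I a b u -> cont_on_I a b w ->
  cont_on_I a b (fun t => u t * w t).
Proof.
  intros Hab Hu Hw.
  apply cont_ext with (fun t => u (clamp a b t) * w (clamp a b t)).
  - apply B2. intros c _.
    apply (continuity_pt_mult (fun t => u (clamp a b t)) (fun t => w (clamp a b t)));
    apply B1; auto.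
  - intros; rewrite clamp_id; auto.
Qed.

Lemma cont_plus a b u w : a <= b -> cont_on_I a b u -> cont_on_I a b w ->
  cont_on_I a b (fun t => u t + w t).
Proof.
  intros Hab Hu Hw.
  apply cont_ext with (fun t => u (clamp a b t) + w (clamp a b t)).
  - apply B2. intros c _.
    apply (continuity_pt_plus (fun t => u (clamp a b t)) (fun t => w (clamp a b t)));
    apply B1; auto.
  - intros; rewrite clamp_id; auto.
Qed.

Lemma cont_const a b c : cont_on_I a b (fun _ => c).
Proof.
  intros t _ eps He. exists 1; split; [lra|]. intros.
  unfold Rminus; rewrite Rplus_opp_r, Rabs_R0; lra.
Qed.

Lemma cont_lin a b u w l : a <= b -> cont_on_I a b u -> cont_on_I a b w ->
  cont_on_I a b (fun t => u t + l * w t).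
Proof.
  intros. apply cont_plus; auto. apply cont_mult; auto. apply cont_const.
Qed.

Lemma cont_slice a b K t : cont_on_II a b K -> inI a b t -> cont_on_I a b (fun s => K t s).
Proof.
  intros HK Ht s Hs eps He. destruct (HK t s Ht Hs eps He) as [d [Hd Hd']].
  exists d; split; auto. intros s' Hs' Hl. apply Hd'; auto.
  unfold Rminus; rewrite Rplus_opp_r, Rabs_R0; lra.
Qed.

Lemma cont_comp a b f x : cont_on_IxR a b f -> cont_on_I a b x ->
  cont_on_I a b (fun s => f s (x s)).
Proof.
  intros Hf Hx t Ht eps He. destruct (Hf t (x t) Ht eps He) as [d1 [Hd1 H1]].
  destruct (Hx t Ht d1 Hd1) as [d2 [Hd2 H2]].
  exists (Rmin d1 d2); split; [apply Rmin_pos; auto|].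
  intros t' Ht' Hl. apply H1; auto.
  - eapply Rlt_le_trans; [apply Hl| apply Rmin_l].
  - apply H2; auto. eapply Rlt_le_trans; [apply Hl| apply Rmin_r].
Qed.

Lemma cont_bounded a b u : a <= b -> cont_on_I a b u ->
  exists M, 0 <= M /\ forall s, inI a b s -> Rabs (u s) <= M.
Proof.
  intros Hab Hu.
  pose proof (B1 a b u Hab Hu) as Hc.
  destruct (continuity_ab_maj _ a b Hab (fun c _ => Hc c)) as [Mx [HM _]].
  destruct (continuity_ab_min _ a b Hab (fun c _ => Hc c)) as [mx [Hm _]].
  exists (Rabs (u (clamp a b Mx)) + Rabs (u (clamp a b mx))).
  split; [pose proof (Rabs_pos (u (clamp a b Mx))); pose proof (Rabs_pos (u (clamp a b mx))); lra|].
  intros s Hs. specialize (HM s Hs). specialize (Hm s Hs). simpl in HM, Hm.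
  rewrite (clamp_id a b s Hs) in HM, Hm.
  revert HM Hm. unfold Rabs; repeat destruct Rcase_abs; lra.
Qed.

Lemma RC_int a b u : a <= b -> cont_on_I a b u -> Riemann_integrable u a b.
Proof.
  intros Hab Hu.
  apply Riemann_integrable_ext with (fun t => u (clamp a b t)).
  - intros x Hx. rewrite Rmin_left, Rmax_right in Hx by auto. rewrite clamp_id; auto.
  - apply continuity_implies_RiemannInt; auto. intros; apply B1; auto.
Qed.

Lemma integral_eq u a b (pr : Riemann_integrable u a b) : integral u a b = RiemannInt pr.
Proof.
  unfold integral. destruct excluded_middle_informative as [H|H].
  - apply RiemannInt_P5.
  - exfalso; apply H; exists pr; auto.
Qed.

Lemma int_lin a b u v l : a <= b -> cont_on_I a b u -> cont_on_I a b v ->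
  integral (fun x => u x + l * v x) a b = integral u a b + l * integral v a b.
Proof.
  intros Hab Hu Hv.
  pose proof (RC_int _ _ _ Hab Hu) as pu. pose proof (RC_int _ _ _ Hab Hv) as pv.
  rewrite (integral_eq _ _ _ pu), (integral_eq _ _ _ pv), (integral_eq _ _ _ (RiemannInt_P10 l pu pv)).
  apply RiemannInt_P13.
Qed.

Lemma int_le a b u v : a <= b -> cont_on_I a b u -> cont_on_I a b v ->
  (forall x, a < x < b -> u x <= v x) -> integral u a b <= integral v a b.
Proof.
  intros Hab Hu Hv H.
  pose proof (RC_int _ _ _ Hab Hu) as pu. pose proof (RC_int _ _ _ Hab Hv) as pv.
  rewrite (integral_eq _ _ _ pu), (integral_eq _ _ _ pv). apply RiemannInt_P19; auto.
Qed.

Lemma int_const a b c : integral (fun _ => c) a b = c * (b - a).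
Proof.
  change (fun _ : R => c) with (fct_cte c). rewrite (integral_eq _ _ _ (RiemannInt_P14 a b c)). apply RiemannInt_P15.
Qed.

Lemma unif a b K : a <= b -> cont_on_II a b K -> forall t, inI a b t ->
  forall eps, 0 < eps -> exists d, 0 < d /\ forall t' s, inI a b t' -> inI a b s ->
    Rabs (t' - t) < d -> Rabs (K t' s - K t s) < eps.
Proof.
  intros Hab HK t Ht eps He.
  set (E := fun u => a <= u <= b /\ exists d, 0 < d /\ forall t' s, inI a b t' -> inI a b s ->
    s <= u -> Rabs (t' - t) < d -> Rabs (K t' s - K t s) < eps).
  assert (Ea : E a).
  { split; [lra|]. assert (Ha : inI a b a) by (unfold inI; lra).
    destruct (HK t a Ht Ha eps He) as [d [Hd Hd']]. exists d; split; auto.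
    intros t' s Ht' Hs Hsa Hl. assert (s = a) by (unfold inI in Hs; lra). subst s.
    apply Hd'; auto. unfold Rminus; rewrite Rplus_opp_r, Rabs_R0; lra. }
  assert (Hb : bound E) by (exists b; intros u [Hu _]; lra).
  destruct (completeness E Hb (ex_intro _ a Ea)) as [c [Hub Hlub]].
  assert (Hac : a <= c) by (apply Hub; auto).
  assert (Hcb : c <= b) by (apply Hlub; intros u [Hu _]; lra).
  assert (Hc : inI a b c) by (unfold inI; lra).
  assert (He2 : 0 < eps / 2) by lra.
  destruct (HK t c Ht Hc (eps/2) He2) as [dc [Hdc Hdc']].
  assert (Hex : exists u, E u /\ c - dc < u).
  { apply NNPP; intro Hn.
    assert (is_upper_bound E (c - dc)).
    { intros u Eu. destruct (Rle_dec u (c - dc)); auto. exfalso; apply Hn; exists u; split; auto; lra. }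
    specialize (Hlub _ H). lra. }
  destruct Hex as [u [[Hu [du [Hdu Hdu']]] Hcu]].
  assert (Ev : E (Rmin b (c + dc/2))).
  { split; [unfold Rmin; destruct Rle_dec; lra|].
    exists (Rmin du dc); split; [apply Rmin_pos; auto|].
    intros t' s Ht' Hs Hsv Hl.
    destruct (Rle_dec s u).
    - apply Hdu'; auto. eapply Rlt_le_trans; [apply Hl|apply Rmin_l].
    - assert (Hsc : Rabs (s - c) < dc).
      { assert (s <= c + dc/2) by (eapply Rle_trans; [apply Hsv|apply Rmin_r]).
        unfold Rabs; destruct Rcase_abs; lra. }
      assert (Htt : Rabs (t' - t) < dc) by (eapply Rlt_le_trans; [apply Hl|apply Rmin_r]).
      pose proof (Hdc' t' s Ht' Hs Htt Hsc) as H1.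
      assert (H0 : Rabs (t - t) < dc) by (unfold Rminus; rewrite Rplus_opp_r, Rabs_R0; lra).
      pose proof (Hdc' t s Ht Hs H0 Hsc) as H2.
      pose proof (tri (K t' s) (K t c) (K t s)). rewrite (abs_sym (K t c) (K t s)) in H. lra. }
  assert (Hvc : Rmin b (c + dc/2) <= c) by (apply Hub; auto).
  destruct Ev as [_ [d [Hd Hd']]]. exists d; split; auto.
  intros t' s Ht' Hs Hl. apply Hd'; auto.
  revert Hvc. unfold Rmin; destruct Rle_dec; unfold inI in Hs; lra.
Qed.

Lemma F_cont a b f g x : a <= b -> cont_on_IxR a b f -> cont_on_IxR a b g -> cont_on_I a b x ->
  cont_on_I a b (fun s => f s (x s) + g s (x s)).
Proof. intros; apply cont_plus; auto; apply cont_comp; auto. Qed.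

Lemma kF_cont a b K1 K2 f g x t : a <= b -> cont_on_II a b K1 -> cont_on_II a b K2 ->
  cont_on_IxR a b f -> cont_on_IxR a b g -> cont_on_I a b x -> inI a b t ->
  cont_on_I a b (fun s => (K1 t s + K2 t s) * (f s (x s) + g s (x s))).
Proof.
  intros. apply cont_mult; auto. apply cont_plus; auto; apply cont_slice; auto.
  apply F_cont; auto.
Qed.

Lemma T_cont a b K1 K2 f g h x : a < b -> cont_on_II a b K1 -> cont_on_II a b K2 ->
  cont_on_I a b h -> cont_on_IxR a b f -> cont_on_IxR a b g -> cont_on_I a b x ->
  cont_on_I a b (eq_rhs a b K1 K2 f g h x).
Proof.
  intros Hab HK1 HK2 Hh Hf Hg Hx.
  assert (Hab' : a <= b) by lra.
  destruct (cont_bounded a b _ Hab' (F_cont a b f g x Hab' Hf Hg Hx)) as [M [HM0 HM]].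
  intros t Ht eps He.
  set (e' := eps / (4 * (b - a) * (M + 1))).
  assert (He' : 0 < e') by (unfold e'; apply Rdiv_lt_0_compat; [lra| ]; 
     apply Rmult_lt_0_compat; lra).
  assert (He2 : 0 < e' / 2) by lra.
  destruct (unif a b K1 Hab' HK1 t Ht (e'/2) He2) as [d1 [Hd1 H1]].
  destruct (unif a b K2 Hab' HK2 t Ht (e'/2) He2) as [d2 [Hd2 H2]].
  assert (He3 : 0 < eps / 2) by lra.
  destruct (Hh t Ht (eps/2) He3) as [d3 [Hd3 H3]].
  exists (Rmin d1 (Rmin d2 d3)); split; [repeat apply Rmin_pos; auto|].
  intros t' Ht' Hl.
  assert (Hl1 : Rabs (t' - t) < d1) by (eapply Rlt_le_trans; [apply Hl|apply Rmin_l]).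
  assert (Hl2 : Rabs (t' - t) < d2) by (eapply Rlt_le_trans; [apply Hl|eapply Rle_trans; [apply Rmin_r|apply Rmin_l]]).
  assert (Hl3 : Rabs (t' - t) < d3) by (eapply Rlt_le_trans; [apply Hl|eapply Rle_trans; [apply Rmin_r|apply Rmin_r]]).
  specialize (H3 t' Ht' Hl3).
  unfold eq_rhs.
  set (u := fun s => (K1 t' s + K2 t' s) * (f s (x s) + g s (x s))).
  set (v := fun s => (K1 t s + K2 t s) * (f s (x s) + g s (x s))).
  assert (Hu : cont_on_I a b u) by (apply kF_cont; auto).
  assert (Hv : cont_on_I a b v) by (apply kF_cont; auto).
  pose proof (int_lin a b u v (-1) Hab' Hu Hv) as Hlin.
  assert (Hw : cont_on_I a b (fun s => u s + -1 * v s)) by (apply cont_lin; auto).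
  assert (Hbd : forall s, a < s < b -> Rabs (u s + -1 * v s) <= e' * (M + 1)).
  { intros s Hs. assert (Hs' : inI a b s) by (unfold inI; lra).
    specialize (H1 t' s Ht' Hs' Hl1). specialize (H2 t' s Ht' Hs' Hl2). specialize (HM s Hs').
    unfold u, v.
    replace ((K1 t' s + K2 t' s) * (f s (x s) + g s (x s)) + -1 * ((K1 t s + K2 t s) * (f s (x s) + g s (x s))))
      with (((K1 t' s - K1 t s) + (K2 t' s - K2 t s)) * (f s (x s) + g s (x s))) by ring.
    rewrite Rabs_mult. apply Rmult_le_compat; try apply Rabs_pos.
    - eapply Rle_trans; [apply Rabs_triang|]. lra.
    - lra. }
  assert (Hlo : integral (fun _ => - (e' * (M + 1))) a b <= integral (fun s => u s + -1 * v s) a b).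
  { apply int_le; auto. apply cont_const. intros s Hs. specialize (Hbd s Hs). revert Hbd.
    unfold Rabs; destruct Rcase_abs; lra. }
  assert (Hhi : integral (fun s => u s + -1 * v s) a b <= integral (fun _ => (e' * (M + 1))) a b).
  { apply int_le; auto. apply cont_const. intros s Hs. specialize (Hbd s Hs). revert Hbd.
    unfold Rabs; destruct Rcase_abs; lra. }
  rewrite !int_const in Hlo, Hhi. rewrite Hlin in Hlo, Hhi.
  assert (Hq : e' * (M + 1) * (b - a) = eps / 4).
  { unfold e'. field. split; lra. }
  fold u v. revert Hlo Hhi H3. rewrite Hq.
  replace (- (e' * (M + 1)) * (b - a)) with (- (eps/4)) by (rewrite <- Hq; ring).
  unfold Rabs; repeat destruct Rcase_abs; lra.
Qed.

Lemma pq_bound a b f g theta lam mu x y D s :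
  (forall r, 0 <= r -> 0 <= theta r) ->
  (forall r s, 0 <= r -> r <= s -> theta r <= theta s) ->
  0 < lam -> 0 < mu ->
  (forall t x y, inI a b t -> x >= y ->
        0 <= f t x - f t y <= lam * theta (x - y) /\
        - (mu * theta (x - y)) <= g t x - g t y <= 0) ->
  inI a b s -> Rabs (x - y) <= D ->
  Rabs ((f s x + g s x) - (f s y + g s y)) <= (lam + mu) * theta D.
Proof.
  intros Hth0 Hmon Hl Hm Hfg Hs Hxy.
  destruct (Rge_dec x y) as [Hge|Hlt].
  - destruct (Hfg s x y Hs Hge) as [[A1 A2] [A3 A4]].
    assert (Hd : theta (x - y) <= theta D).
    { apply Hmon; [lra|]. revert Hxy; unfold Rabs; destruct Rcase_abs; lra. }
    pose proof (Hth0 (x - y) ltac:(lra)).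
    assert (lam * theta (x - y) <= lam * theta D) by (apply Rmult_le_compat_l; lra).
    assert (mu * theta (x - y) <= mu * theta D) by (apply Rmult_le_compat_l; lra).
    assert (0 <= lam * theta (x-y)) by (apply Rmult_le_pos; lra).
    assert (0 <= mu * theta (x-y)) by (apply Rmult_le_pos; lra).
    unfold Rabs; destruct Rcase_abs; lra.
  - assert (Hge : y >= x) by lra.
    destruct (Hfg s y x Hs Hge) as [[A1 A2] [A3 A4]].
    assert (Hd : theta (y - x) <= theta D).
    { apply Hmon; [lra|]. revert Hxy; unfold Rabs; destruct Rcase_abs; lra. }
    pose proof (Hth0 (y - x) ltac:(lra)).
    assert (lam * theta (y - x) <= lam * theta D) by (apply Rmult_le_compat_l; lra).
    assert (mu * theta (y - x) <= mu * theta D) by (apply Rmult_le_compat_l; lra).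
    assert (0 <= lam * theta (y-x)) by (apply Rmult_le_pos; lra).
    assert (0 <= mu * theta (y-x)) by (apply Rmult_le_pos; lra).
    unfold Rabs; destruct Rcase_abs; lra.
Qed.

Lemma contr a b K1 K2 f g h theta lam mu S x y D :
  a < b -> cont_on_II a b K1 -> cont_on_II a b K2 ->
  cont_on_IxR a b f -> cont_on_IxR a b g ->
  (forall t s, inI a b t -> inI a b s -> 0 <= K1 t s /\ K2 t s <= 0) ->
  (forall r, 0 <= r -> 0 <= theta r) ->
  (forall r s, 0 <= r -> r <= s -> theta r <= theta s) ->
  (forall r, 0 <= r -> theta r <= r / 2) ->
  0 < lam -> 0 < mu ->
  (forall t x y, inI a b t -> x >= y ->
        0 <= f t x - f t y <= lam * theta (x - y) /\
        - (mu * theta (x - y)) <= g t x - g t y <= 0) ->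
  (forall t, inI a b t -> integral (fun s => K1 t s - K2 t s) a b <= S) ->
  (lam + mu) * S <= 1 ->
  cont_on_I a b x -> cont_on_I a b y -> 0 <= D ->
  (forall s, inI a b s -> Rabs (x s - y s) <= D) ->
  forall t, inI a b t ->
    Rabs (eq_rhs a b K1 K2 f g h x t - eq_rhs a b K1 K2 f g h y t) <= D / 2.
Proof.
  intros Hab HK1 HK2 Hf Hg Hsign Hth0 Hmon Hhalf Hl Hm Hfg HS HS1 Hx Hy HD Hxy t Ht.
  assert (Hab' : a <= b) by lra.
  unfold eq_rhs.
  set (u := fun s => (K1 t s + K2 t s) * (f s (x s) + g s (x s))).
  set (v := fun s => (K1 t s + K2 t s) * (f s (y s) + g s (y s))).
  assert (Hu : cont_on_I a b u) by (apply kF_cont; auto).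
  assert (Hv : cont_on_I a b v) by (apply kF_cont; auto).
  pose proof (int_lin a b u v (-1) Hab' Hu Hv) as Hlin.
  assert (Hw : cont_on_I a b (fun s => u s + -1 * v s)) by (apply cont_lin; auto).
  set (C := (lam + mu) * theta D).
  assert (HC : 0 <= C) by (unfold C; apply Rmult_le_pos; [lra|apply Hth0; auto]).
  set (G := fun s => K1 t s - K2 t s).
  assert (HG : cont_on_I a b G).
  { unfold G. apply cont_ext with (fun s => K1 t s + -1 * K2 t s).
    - apply cont_lin; auto; apply cont_slice; auto.
    - intros; ring. }
  assert (Hbd : forall s, a < s < b -> Rabs (u s + -1 * v s) <= 0 + C * G s).
  { intros s Hs. assert (Hs' : inI a b s) by (unfold inI; lra).
    pose proof (pq_bound a b f g theta lam mu (x s) (y s) D s Hth0 Hmon Hl Hm Hfg Hs' (Hxy s Hs')) as Hpq.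
    destruct (Hsign t s Ht Hs') as [P1 P2].
    unfold u, v, G.
    replace ((K1 t s + K2 t s) * (f s (x s) + g s (x s)) + -1 * ((K1 t s + K2 t s) * (f s (y s) + g s (y s))))
      with ((K1 t s + K2 t s) * ((f s (x s) + g s (x s)) - (f s (y s) + g s (y s)))) by ring.
    rewrite Rabs_mult. rewrite Rplus_0_l, Rmult_comm.
    apply Rmult_le_compat; try apply Rabs_pos; auto.
    unfold Rabs; destruct Rcase_abs; lra. }
  assert (Hlo : integral (fun s => 0 + - C * G s) a b <= integral (fun s => u s + -1 * v s) a b).
  { apply int_le; auto. apply cont_lin; auto; apply cont_const. intros s Hs. specialize (Hbd s Hs). revert Hbd.
    unfold Rabs; destruct Rcase_abs; lra. }
  assert (Hhi : integral (fun s => u s + -1 * v s) a b <= integral (fun s => 0 + C * G s) a b).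
  { apply int_le; auto. apply cont_lin; auto; apply cont_const. intros s Hs. specialize (Hbd s Hs). revert Hbd.
    unfold Rabs; destruct Rcase_abs; lra. }
  rewrite (int_lin a b (fun _ => 0) G) in Hlo, Hhi; auto; try apply cont_const.
  rewrite int_const in Hlo, Hhi. rewrite Hlin in Hlo, Hhi.
  assert (HGS : integral G a b <= S) by (apply HS; auto).
  assert (HCS : C * integral G a b <= C * S) by (apply Rmult_le_compat_l; auto).
  assert (HCS2 : C * S <= theta D).
  { unfold C. pose proof (Hth0 D HD).
    replace ((lam + mu) * theta D * S) with (theta D * ((lam + mu) * S)) by ring.
    rewrite <- (Rmult_1_r (theta D)) at 2. apply Rmult_le_compat_l; auto. }
  pose proof (Hhalf D HD).
  fold u v. revert Hlo Hhi. unfold Rabs; repeat destruct Rcase_abs; nra.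
Qed.

Lemma INR_le_pow2 n : INR n <= 2 ^ n.
Proof.
  induction n; [simpl; lra|]. rewrite S_INR. simpl pow.
  assert (1 <= 2 ^ n) by (apply pow_R1_Rle; lra). lra.
Qed.

Lemma small C eps : 0 <= C -> 0 < eps -> exists n, C / 2 ^ n < eps.
Proof.
  intros HC He. destruct (archimed_cor1 (eps / (C + 1))) as [N [HN HN0]].
  { apply Rdiv_lt_0_compat; lra. }
  exists N. pose proof (lt_0_INR N ltac:(lia)) as HI.
  pose proof (INR_le_pow2 N).
  assert (/ 2 ^ N <= / INR N) by (apply Rinv_le_contravar; auto).
  assert (0 < / 2 ^ N) by (apply Rinv_0_lt_compat, pow_lt; lra).
  unfold Rdiv. apply Rle_lt_trans with ((C + 1) * / INR N).
  - apply Rmult_le_compat; lra.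
  - apply Rlt_le_trans with ((C + 1) * (eps / (C + 1))).
    + apply Rmult_lt_compat_l; lra.
    + right; field; lra.
Qed.

Fixpoint XX a b K1 K2 f g h (n : nat) : R -> R :=
  match n with
  | O => fun _ => 0
  | S n => eq_rhs a b K1 K2 f g h (XX a b K1 K2 f g h n)
  end.

Theorem theorem3p1 (a b : R) (K1 K2 : R -> R -> R) (h : R -> R)
  (f g : R -> R -> R) :
  a < b ->
  cont_on_II a b K1 -> cont_on_II a b K2 -> cont_on_I a b h ->
  cont_on_IxR a b f -> cont_on_IxR a b g ->
  (* (i) *)
  (forall t s, inI a b t -> inI a b s -> 0 <= K1 t s /\ K2 t s <= 0) ->
  (* (ii) *)
  (exists (theta : R -> R) (lam mu : R), in_Theta theta /\ 0 < lam /\ 0 < mu /\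
     (forall t x y, inI a b t -> x >= y ->
        0 <= f t x - f t y <= lam * theta (x - y) /\
        - (mu * theta (x - y)) <= g t x - g t y <= 0) /\
  (* (iii) *)
     (exists S, is_lub (fun v => exists t, inI a b t /\
                   v = integral (fun s => K1 t s - K2 t s) a b) S /\
                (lam + mu) * S <= 1)) ->
  (exists alpha beta, coupled_lower_upper a b K1 K2 f g h alpha beta) ->
  (exists x, is_solution a b K1 K2 f g h x) /\
  (forall x y, is_solution a b K1 K2 f g h x -> is_solution a b K1 K2 f g h y ->
     forall t, inI a b t -> x t = y t).
Proof.
  intros Hab HK1 HK2 Hh Hf Hg Hsign [theta [lam [mu [[Hth0 [Hmon [psi [[Hpsi0 _] Hpsi]]]] [Hl [Hm [Hfg [SS [[HSub _] HS1]]]]]]]]] _.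
  assert (Hab' : a <= b) by lra.
  assert (Hhalf : forall r, 0 <= r -> theta r <= r / 2).
  { intros r Hr. rewrite Hpsi; auto. pose proof (Hpsi0 (r/2) ltac:(lra)). lra. }
  assert (HS : forall t, inI a b t -> integral (fun s => K1 t s - K2 t s) a b <= SS).
  { intros t Ht. apply HSub. exists t; auto. }
  pose proof (fun x y D => contr a b K1 K2 f g h theta lam mu SS x y D Hab HK1 HK2 Hf Hg Hsign
     Hth0 Hmon Hhalf Hl Hm Hfg HS HS1) as Contr.
  split.
  -
    set (X := XX a b K1 K2 f g h).
    assert (HXc : forall n, cont_on_I a b (X n)).
    { induction n; simpl. apply cont_const. apply T_cont; auto. }
    destruct (cont_bounded a b (X 1%nat) Hab' (HXc 1%nat)) as [C [HC0 HC]].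
    assert (Hstep : forall n s, inI a b s -> Rabs (X (S n) s - X n s) <= C / 2 ^ n).
    { induction n; intros s Hs.
      - simpl pow. replace (X 0%nat s) with 0 by reflexivity. rewrite Rminus_0_r.
        replace (C / 1) with C by field. apply HC; auto.
      - change (X (S (S n))) with (eq_rhs a b K1 K2 f g h (X (S n))).
        change (X (S n)) with (eq_rhs a b K1 K2 f g h (X n)) at 2.
        eapply Rle_trans. apply Contr; auto.
        + apply Rle_mult_inv_pos; [auto|apply pow_lt; lra].
        + simpl pow. right; field. apply pow_nonzero; lra. }
    assert (Htele : forall n k s, inI a b s ->
       Rabs (X (n + k)%nat s - X n s) <= 2 * C / 2 ^ n - 2 * C / 2 ^ (n + k)).
    { intros n k s Hs. induction k.
      - rewrite Nat.add_0_r. unfold Rminus at 1; rewrite Rplus_opp_r, Rabs_R0; lra.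
      - rewrite Nat.add_succ_r. eapply Rle_trans; [apply (tri _ (X (n + k)%nat s))|].
        pose proof (Hstep (n + k)%nat s Hs).
        simpl pow. assert (2 * C / (2 * 2 ^ (n + k)) = C / 2 ^ (n + k)).
        { field. apply pow_nonzero; lra. }
        assert (2 * C / 2 ^ (n + k) = 2 * (C / 2 ^ (n+k))) by (unfold Rdiv; ring). lra. }
    assert (Hcau : forall n m s, inI a b s -> (n <= m)%nat ->
       Rabs (X m s - X n s) <= 2 * C / 2 ^ n).
    { intros n m s Hs Hnm. replace m with (n + (m - n))%nat by lia.
      pose proof (Htele n (m - n)%nat s Hs).
      assert (0 <= 2 * C / 2 ^ (n + (m - n))) by (apply Rle_mult_inv_pos; [lra|apply pow_lt; lra]).
      lra. }
    assert (Hcc : forall t, Cauchy_crit (fun n => X n (clamp a b t))).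
    { intros t eps He. destruct (small (4 * C) eps ltac:(lra) He) as [N HN].
      exists N. intros n m Hn Hm'. unfold R_dist.
      pose proof (clamp_in a b t Hab').
      pose proof (Hcau N n _ H Hn). pose proof (Hcau N m _ H Hm').
      pose proof (tri (X n (clamp a b t)) (X N (clamp a b t)) (X m (clamp a b t))).
      rewrite (abs_sym (X N (clamp a b t))) in H2.
      assert (4 * C / 2 ^ N = 2 * (2 * C / 2 ^ N)) by (unfold Rdiv; ring). lra. }
    set (x := fun t => proj1_sig (R_complete _ (Hcc t))).
    assert (Hxcv : forall t, Un_cv (fun n => X n (clamp a b t)) (x t)).
    { intros t. unfold x. destruct (R_complete _ (Hcc t)); auto. }
    assert (Hlim : forall n t, inI a b t -> Rabs (X n t - x t) <= 2 * C / 2 ^ n).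
    { intros n t Ht. apply Rnot_lt_le. intro Hlt.
      set (e := Rabs (X n t - x t) - 2 * C / 2 ^ n).
      destruct (Hxcv t e ltac:(unfold e; lra)) as [N HN].
      specialize (HN (Nat.max N n) ltac:(lia)). unfold R_dist in HN.
      rewrite (clamp_id a b t Ht) in HN.
      pose proof (Hcau n (Nat.max N n) t Ht ltac:(lia)).
      pose proof (tri (X n t) (X (Nat.max N n) t) (x t)).
      rewrite (abs_sym (X n t) (X (Nat.max N n) t)) in H0. unfold e in HN. lra. }
    assert (Hxc : cont_on_I a b x).
    { intros t Ht eps He. destruct (small (2 * C) (eps / 3) ltac:(lra) ltac:(lra)) as [n Hn].
      destruct (HXc n t Ht (eps/3) ltac:(lra)) as [d [Hd Hd']].
      exists d; split; auto. intros t' Ht' Hl'.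
      specialize (Hd' t' Ht' Hl').
      pose proof (Hlim n t Ht). pose proof (Hlim n t' Ht').
      pose proof (tri (x t') (X n t') (x t)).
      pose proof (tri (X n t') (X n t) (x t)).
      rewrite (abs_sym (x t') (X n t')) in H1. lra. }
    exists x. split; auto.
    intros t Ht. apply NNPP; intro Hne.
    assert (Hd : 0 < Rabs (x t - eq_rhs a b K1 K2 f g h x t)).
    { apply Rabs_pos_lt. intro; apply Hne; lra. }
    destruct (small (2 * C) _ ltac:(lra) Hd) as [n Hn].
    pose proof (Hlim (S n) t Ht) as H1.
    assert (Hd2 : 0 <= 2 * C / 2 ^ n) by (apply Rle_mult_inv_pos; [lra|apply pow_lt; lra]).
    pose proof (Contr (X n) x (2 * C / 2 ^ n) (HXc n) Hxc Hd2
       (fun s Hs => Hlim n s Hs) t Ht) as H2.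
    change (X (S n) t) with (eq_rhs a b K1 K2 f g h (X n) t) in H1.
    simpl pow in H1.
    assert (2 * C / (2 * 2 ^ n) = 2 * C / 2 ^ n / 2) by (field; apply pow_nonzero; lra).
    pose proof (tri (x t) (eq_rhs a b K1 K2 f g h (X n) t) (eq_rhs a b K1 K2 f g h x t)).
    rewrite (abs_sym (x t) (eq_rhs a b K1 K2 f g h (X n) t)) in H0. lra.
  -
    intros x y [Hx Ex] [Hy Ey] t Ht.
    assert (Hxy : cont_on_I a b (fun s => x s + -1 * y s)) by (apply cont_lin; auto).
    destruct (cont_bounded a b _ Hab' Hxy) as [D [HD0 HD]].
    assert (Hn : forall n s, inI a b s -> Rabs (x s - y s) <= D / 2 ^ n).
    { induction n; intros s Hs.
      - simpl pow. replace (D / 1) with D by field. specialize (HD s Hs).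
        replace (x s - y s) with (x s + -1 * y s) by ring. auto.
      - rewrite (Ex s Hs), (Ey s Hs). eapply Rle_trans.
        apply Contr; auto. apply Rle_mult_inv_pos; [auto|apply pow_lt; lra].
        simpl pow. right; field. apply pow_nonzero; lra. }
    apply NNPP; intro Hne.
    assert (Hd : 0 < Rabs (x t - y t)) by (apply Rabs_pos_lt; intro; apply Hne; lra).
    destruct (small D _ HD0 Hd) as [n Hn'].
    specialize (Hn n t Ht). lra.
Qed.
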